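(* $\mathfrak{L}(\mathrm{rtDBVA}(1))\subsetneq\mathfrak{L}(\mathrm{rtDBVA}(2))$.
   Context: $\mathfrak{L}(A)$ denotes the class of languages recognized by machines of type $A$. A real-time deterministic blind vector automaton of dimension $k$ ($\mathrm{rtDBVA}(k)$) is a 6-tuple $(Q,\Sigma,\delta,q_0,Q_a,v)$ with finite state set $Q$, initial state $q_0$, accept states $Q_a$, initial row vector $v\in\mathbb{Q}^k$ (freely chosen), and $\delta:Q\times(\Sigma\cup\{\cent,\$\})\to Q\times S$, $S$ the set of $k\times k$ rational matrices; the input $w$ is read as $\cent w\$$ left to right, one symbol per step, and $\delta(q,\sigma)=(q',M)$ means that in state $q$ reading $\sigma$ the machine goes to $q'$ and multiplies its row vector on the right by $M$. The input is accepted iff after processing $\$$ the state is in $Q_a$ and the first vector entry equals $1$. *)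

(* Defs.v *)
From HB Require Import structures.
From mathcomp Require Import all_boot all_order all_algebra.
Set Implicit Arguments. Unset Strict Implicit. Unset Printing Implicit Defensive.
Import Order.TTheory GRing.Theory Num.Theory.
Local Open Scope ring_scope.

Inductive tape_sym (Sigma : Type) := Cent | Dollar | Sym of Sigma.
Arguments Cent {Sigma}. Arguments Dollar {Sigma}.

(* Real-time deterministic blind vector automaton of dimension k over Sigma,
   with rational entries:  (Q, Sigma, delta, q0, Qa, v). *)
Record rtDBVA (Sigma : Type) (k : nat) := RtDBVA {
  st : finType;
  delta : st -> tape_sym Sigma -> st * 'M[rat]_k;
  q0 : st;
  Qa : {set st};
  v0 : 'rV[rat]_k
}.

Definition step (Sigma : Type) k (M : rtDBVA Sigma k)
  (c : st M * 'rV[rat]_k) (a : tape_sym Sigma) : st M * 'rV[rat]_k :=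
  let: (q, v) := c in let: (q', A) := @delta Sigma k M q a in (q', v *m A).

Definition run (Sigma : Type) k (M : rtDBVA Sigma k) (w : seq Sigma)
  : st M * 'rV[rat]_k :=
  foldl (@step Sigma k M) (@q0 Sigma k M, @v0 Sigma k M) (Cent :: map (@Sym Sigma) w ++ [:: Dollar]).

Definition accepts (Sigma : Type) k (M : rtDBVA Sigma k) (w : seq Sigma) : Prop :=
  (run M w).1 \in @Qa Sigma k M /\
  exists i : 'I_k, nat_of_ord i = 0%N /\ (run M w).2 0 i = 1.

Definition rtDBVA_lang (Sigma : Type) (k : nat) (L : seq Sigma -> Prop) : Prop :=
  exists M : rtDBVA Sigma k, forall w, L w <-> accepts M w.

(* Main.v *)
Require Import Defs.
From HB Require Import structures.
From mathcomp Require Import all_boot all_order all_algebra.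
Set Implicit Arguments. Unset Strict Implicit. Unset Printing Implicit Defensive.
Import Order.TTheory GRing.Theory Num.Theory.
Local Open Scope ring_scope.

Definition embv (v : 'rV[rat]_1) : 'rV[rat]_2 := \row_j (if j == ord0 then v 0 0 else 0).
Definition embm (A : 'M[rat]_1) : 'M[rat]_2 :=
  \matrix_(i, j) (if (i == ord0) && (j == ord0) then A 0 0 else 0).

Lemma emb_mul v A : embv v *m embm A = embv (v *m A).
Proof.
apply/rowP => j; rewrite !mxE !big_ord_recl big_ord0 !mxE /=.
by rewrite big_ord0 mul0r !addr0; case: (j == ord0); rewrite ?mulr0.
Qed.

Section Emb.
Variable Sigma : Type.
Variable M : rtDBVA Sigma 1.
Definition M2 : rtDBVA Sigma 2 :=
  @RtDBVA Sigma 2 (st M) (fun q a => ((@delta Sigma 1 M q a).1, embm (@delta Sigma 1 M q a).2)) (@q0 _ _ M) (@Qa _ _ M) (embv (@v0 _ _ M)).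

Lemma fold_emb s q v :
  foldl (@step Sigma 2 M2) (q, embv v) s =
  ((foldl (@step Sigma 1 M) (q, v) s).1, embv (foldl (@step Sigma 1 M) (q, v) s).2).
Proof.
elim: s q v => [|a s IH] q v //=.
rewrite /step /=; case: (@delta Sigma 1 M q a) => q' A /=.
by rewrite emb_mul IH.
Qed.

Lemma run_emb w : run M2 w = ((run M w).1, embv (run M w).2).
Proof. exact: fold_emb. Qed.

Lemma acc_emb w : accepts M w <-> accepts M2 w.
Proof.
rewrite /accepts run_emb /=.
split => -[H1 [i [Hi H2]]]; split => //.
- exists ord0; split => //. rewrite mxE /=.
  by move: H2; rewrite (ord1 i).
- exists ord0; split => //. have E : i = ord0 by apply/val_inj.
  by move: H2; rewrite E mxE.
Qed.
End Emb.

Lemma fold_lin (Sigma : Type) k (M : rtDBVA Sigma k) s (q : st M) :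
  exists (q' : st M) (P : 'M[rat]_k), forall v, foldl (@step Sigma k M) (q, v) s = (q', v *m P).
Proof.
elim: s q => [|a s IH] q /=.
  by exists q, 1%:M => v; rewrite mulmx1.
case E: (@delta Sigma k M q a) => [q1 A].
have [q' [P HP]] := IH q1.
exists q', (A *m P) => v.
by rewrite HP mulmxA.
Qed.

Definition rowv (x : rat) : 'rV[rat]_2 := \row_j (if j == ord0 then x else 1).
Definition Ma : 'M[rat]_2 := \matrix_(i, j) (if i == j then (if i == ord0 then 2 else 1) else 0).
Definition Mb : 'M[rat]_2 := \matrix_(i, j) (if i == j then (if i == ord0 then 2^-1 else 1) else 0).
Definition MJ : 'M[rat]_2 := \matrix_(i, j) (if i == ord0 then 0 else 1).

Lemma ord2_cases (j : 'I_2) : j = ord0 \/ j = ord_max.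
Proof. case: j => [[|[|//]] Hj]; [left|right]; exact/val_inj. Qed.

Lemma rowv_Ma x : rowv x *m Ma = rowv (2 * x).
Proof.
apply/rowP => j; rewrite !mxE !big_ord_recl big_ord0 !mxE /=.
by case: (ord2_cases j) => ->; rewrite /= ?mxE /=; rewrite ?(mulr0, mul0r, mulr1, add0r, addr0) // mulrC.
Qed.

Lemma rowv_Mb x : rowv x *m Mb = rowv (x / 2).
Proof.
apply/rowP => j; rewrite !mxE !big_ord_recl big_ord0 !mxE /=.
by case: (ord2_cases j) => ->; rewrite /= ?mxE /=; rewrite ?(mulr0, mul0r, mulr1, add0r, addr0).
Qed.

Lemma rowv_MJ x : rowv x *m MJ = rowv 1.
Proof.
apply/rowP => j; rewrite !mxE !big_ord_recl big_ord0 !mxE /=.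
by case: (ord2_cases j) => ->; rewrite /= ?mxE /=; rewrite ?(mulr0, mul0r, mulr1, add0r, addr0).
Qed.

Definition s0 : 'I_3 := ord0.
Definition s1 : 'I_3 := @Ordinal 3 1 isT.
Definition s2 : 'I_3 := @Ordinal 3 2 isT.

Definition deltaN (q : 'I_3) (c : tape_sym bool) : 'I_3 * 'M[rat]_2 :=
  match c with
  | Cent => (q, 1%:M)
  | Sym true => if q == s0 then (s0, Ma) else (s2, 1%:M)
  | Sym false => if q == s2 then (s2, 1%:M) else (s1, Mb)
  | Dollar => if q == s0 then (s0, MJ) else (q, 1%:M)
  end.

Definition N : rtDBVA bool 2 := @RtDBVA bool 2 _ deltaN s0 [set s0; s1] (rowv 1).

Lemma fold_a n x : foldl (@step bool 2 N) (s0, rowv x) (nseq n (Sym true)) = (s0, rowv (2 ^+ n * x)).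
Proof.
elim: n x => [|n IH] x /=; first by rewrite mul1r.
by rewrite rowv_Ma IH exprS mulrCA mulrA.
Qed.

Lemma fold_b n (q : 'I_3) x : q != s2 ->
  foldl (@step bool 2 N) (q, rowv x) (nseq n.+1 (Sym false)) = (s1, rowv (x / 2 ^+ n.+1)).
Proof.
elim: n q x => [|n IH] q x Hq /=.
  by rewrite /step /= (negbTE Hq) rowv_Mb expr1.
rewrite /step /= (negbTE Hq) rowv_Mb.
have := IH s1 (x / 2) isT; rewrite /= /step /= => ->.
by rewrite [in RHS]exprS invfM mulrA.
Qed.

Lemma run_split n s : run N (nseq n true ++ s) =
  foldl (@step bool 2 N) (s0, rowv (2 ^+ n)) (map (@Sym bool) s ++ [:: Dollar]).
Proof.
rewrite /run map_cat map_nseq -catA /= foldl_cat.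
by rewrite /step /= mulmx1 fold_a mulr1.
Qed.

Lemma rowv0 x : (rowv x) 0 ord0 = x.
Proof. by rewrite mxE. Qed.

Lemma acc_a n : accepts N (nseq n true).
Proof.
rewrite /accepts -[nseq n true]cats0 run_split /= /step /= rowv_MJ /=.
split; first by rewrite !inE eqxx.
by exists ord0; split => //; rewrite rowv0.
Qed.

Lemma acc_ab m n : accepts N (nseq m true ++ nseq n.+1 false) <-> m = n.+1.
Proof.
rewrite /accepts run_split map_nseq foldl_cat fold_b //= /step /= mulmx1.
split.
- move=> [_ [i [Hi]]]; have -> : i = ord0 by apply/val_inj.
  rewrite rowv0 => /(congr1 (fun y => y * 2 ^+ n.+1)).
  rewrite mulfVK ?expf_neq0 // mul1r -!natrX => /eqP; rewrite eqr_nat => /eqP.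
  by apply: expnI.
- move=> ->; split; first by rewrite !inE eqxx orbT.
  by exists ord0; split => //; rewrite rowv0 divff // expf_neq0.
Qed.

From Stdlib Require Import Classical.

Lemma not1 : ~ rtDBVA_lang 1 (accepts N).
Proof.
move=> [M HM].
pose pre n := foldl (@step bool 1 M) (@q0 _ _ M, @v0 _ _ M) (Cent :: map (@Sym bool) (nseq n true)).
have runE n s : run M (nseq n true ++ s) =
    foldl (@step bool 1 M) (pre n) (map (@Sym bool) s ++ [:: Dollar]).
  by rewrite /run /pre map_cat -catA /= foldl_cat.
pose f (i : 'I_#|st M|.+1) := (pre i.+1).1.
have [i [j [ne Eij]]] : exists i j, i != j /\ f i = f j.
  apply: NNPP => H.
  have inj : injective f.
    move=> i j Eij; apply/eqP; apply: contraT => ne; exfalso; apply: H; by exists i, j.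
  by have := leq_card f inj; rewrite card_ord ltnn.
have [q' [P HP]] := fold_lin [:: (@Dollar bool)] (f i).
have accE n s : accepts N (nseq n true ++ s) <->
   ((foldl (@step bool 1 M) (pre n) (map (@Sym bool) s ++ [:: Dollar])).1 \in @Qa _ _ M /\
    (foldl (@step bool 1 M) (pre n) (map (@Sym bool) s ++ [:: Dollar])).2 0 0 = 1).
  rewrite HM /accepts runE; split => [[H [k [_ Hk]]]|[H Hk]]; split => //.
    by move: Hk; rewrite (ord1 k).
  by exists ord0.
have val1 n : f i = (pre n).1 -> ((pre n).2 0 0) * P 0 0 = 1.
  move=> Efn.
  have := acc_a n; rewrite -[nseq n true]cats0 accE => -[_].
  by rewrite [pre n]surjective_pairing -Efn HP mxE big_ord1.
have e1 := val1 i.+1 erefl.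
have e2 := val1 j.+1 Eij.
have Pn0 : P 0 0 != 0.
  by apply/eqP => P0; move: e1; rewrite P0 mulr0 => /eqP; rewrite eq_sym oner_eq0.
have Epre : pre i.+1 = pre j.+1.
  rewrite [pre i.+1]surjective_pairing [pre j.+1]surjective_pairing.
  congr pair; first exact: Eij.
  apply/rowP => k; rewrite (ord1 k).
  by apply: (mulIf Pn0); rewrite e1 e2.
have := acc_ab i.+1 i; rewrite accE Epre -accE acc_ab => -[_ H].
have [E] := H erefl.
by move: ne; rewrite (val_inj E) eqxx.
Qed.

Theorem theorem11 :
  (forall (Sigma : finType) (L : seq Sigma -> Prop),
      rtDBVA_lang 1 L -> rtDBVA_lang 2 L) /\
  (exists (Sigma : finType) (L : seq Sigma -> Prop),
      rtDBVA_lang 2 L /\ ~ rtDBVA_lang 1 L).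
Proof.
split.
  move=> Sigma L [M HM]; exists (M2 M) => w; rewrite HM; exact: acc_emb.
exists (bool : finType), (accepts N); split; last exact: not1.
by exists N.
Qed.
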